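(* Let $N$ be a finite set, $C \subseteq 2^{N}$ a family of subsets of $N$, and let $(x^*,y^* )$ be a vertex of the polytope $\bar{P}(C) = \{ (x,y) \in [0,1]^{|N|+1} : \sum_{j \in S} x_j \ge y \ \forall S \in C\}$. Then $y^* \in \{0,1\}$.
   Context: Here $x = (x_j)_{j\in N}$ and $y$ is a scalar variable. *)

(* Defs.v *)
From mathcomp Require Import all_boot all_order all_algebra.
Set Implicit Arguments. Unset Strict Implicit. Unset Printing Implicit Defensive.
Import Order.TTheory GRing.Theory Num.Theory.
Local Open Scope ring_scope.

Definition in_Pbar (R : realFieldType) (N : finType) (C : {set {set N}})
    (x : {ffun N -> R}) (y : R) : Prop :=
  (forall j : N, 0 <= x j <= 1) /\ (0 <= y <= 1) /\
  (forall S : {set N}, S \in C -> y <= \sum_(j in S) x j).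

Definition is_vertex_Pbar (R : realFieldType) (N : finType) (C : {set {set N}})
    (x : {ffun N -> R}) (y : R) : Prop :=
  in_Pbar C x y /\
  forall (x1 x2 : {ffun N -> R}) (y1 y2 t : R),
    in_Pbar C x1 y1 -> in_Pbar C x2 y2 -> 0 < t < 1 ->
    (forall j, x j = t * x1 j + (1 - t) * x2 j) ->
    y = t * y1 + (1 - t) * y2 ->
    x1 = x2 /\ y1 = y2.

(* Main.v *)
Require Import Defs.
From mathcomp Require Import all_boot all_order all_algebra.
From mathcomp Require Import ring lra.
Import Order.TTheory GRing.Theory Num.Theory.
Local Open Scope ring_scope.

Theorem lemma2 (R : realFieldType) (N : finType) (C : {set {set N}})
    (xs : {ffun N -> R}) (ys : R) :
  is_vertex_Pbar C xs ys -> ys = 0 \/ ys = 1.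
Proof.
move=> [[Hx [Hy HS]] Hv].
have [/eqP y0|y0] := boolP (ys == 0); first by left.
have [/eqP y1|y1] := boolP (ys == 1); first by right.
exfalso.
have yp : 0 < ys by rewrite lt_neqAle eq_sym y0; case/andP: Hy.
have yl : ys < 1 by rewrite lt_neqAle y1; case/andP: Hy.
have ny : ys != 0 by [].
have n1y : 1 - ys != 0 by rewrite subr_eq0 eq_sym.
pose x1 := [ffun j => if xs j <= ys then xs j / ys else 1].
pose x2 := [ffun j => (xs j - ys * x1 j) / (1 - ys)].
have P1 : in_Pbar C x1 1.
  split; [|split; first by rewrite lexx ler01].
  - move=> j; rewrite ffunE; case: ifP => h; last by rewrite lexx ler01.
    have := Hx j => /andP [a b].
    apply/andP; split; first by rewrite divr_ge0 // ltW.
    by rewrite ler_pdivrMr // mul1r.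
  - move=> S SC.
    have x1ge : forall j, 0 <= x1 j.
      move=> j; rewrite ffunE; case: ifP => _; last exact: ler01.
      by have := Hx j => /andP [a _]; exact: divr_ge0 a (ltW yp).
    have [j /andP [jS nj]|nex] := pickP [pred j | (j \in S) && ~~ (xs j <= ys)].
      rewrite (bigD1 j) //= ffunE (negbTE nj) lerDl.
      by apply: sumr_ge0 => i _.
    have -> : \sum_(j in S) x1 j = \sum_(j in S) xs j / ys.
      apply: eq_bigr => j jS; rewrite ffunE.
      by have := nex j; rewrite /= jS /= => /negbFE ->.
    rewrite -mulr_suml ler_pdivlMr // mul1r; exact: HS.
have P2 : in_Pbar C x2 0.
  split; [|split; first by rewrite lexx ler01].
  - move=> j; rewrite !ffunE; have := Hx j => /andP [a b].
    have p1 : 0 < 1 - ys by rewrite subr_gt0.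
    case: ifP => h.
      by rewrite mulrCA mulfV // mulr1 subrr mul0r lexx ler01.
    rewrite mulr1 ler_pdivrMr // mul1r ler_pdivlMr // mul0r.
    move/negbT: h; rewrite -ltNge => h.
    apply/andP; split; lra.
  - move=> S _; apply: sumr_ge0 => j _; rewrite !ffunE.
    have := Hx j => /andP [a b].
    have p1 : 0 < 1 - ys by rewrite subr_gt0.
    apply: divr_ge0; last exact: ltW.
    case: ifP => h; first by rewrite mulrCA mulfV // mulr1 subrr.
    move/negbT: h; rewrite -ltNge => h; lra.
have Ex : forall j, xs j = ys * x1 j + (1 - ys) * x2 j.
  move=> j; rewrite [x2 j]ffunE [(1 - ys) * _]mulrC divfK //; ring.
have Ey : ys = ys * 1 + (1 - ys) * 0 by ring.
have [_ /eqP] := Hv x1 x2 1 0 ys P1 P2 (andb_true_intro (conj yp yl)) Ex Ey.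
by rewrite oner_eq0.
Qed.
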